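(* Assume Ostaszewski's $\clubsuit$-principle. Then for every natural number $n\geq 2$ there is an $\omega_1$-$n$-gap over $\omega$, i.e. an $n$-gap $(\mathcal{L}_i:i<n)$ of families of subsets of $\omega$ such that each $(\mathcal{L}_i,\subseteq^* )$ is order-isomorphic to $(\omega_1,<)$.
   Context: $A\subseteq^*B$ means $A\setminus B$ is finite. A tuple $(\mathcal{L}_i:i<n)$ of families of subsets of $\omega$ is a pregap if $L\cap L'$ is finite whenever $L\in\mathcal{L}_i$, $L'\in\mathcal{L}_j$, $i\neq j$; $c:n\to\mathscr{P}(\omega)$ separates it if $L\subseteq^*c(i)$ for all $i<n$ and $L\in\mathcal{L}_i$, and $\bigcap_{i<n}c(i)$ is finite; an $n$-gap is a pregap with no separating $c$. $\clubsuit$: there is a sequence $\langle C_\delta:\delta\in\mathrm{Lim}\rangle$ ($\mathrm{Lim}$ = nonzero countable limit ordinals) with $C_\delta\subseteq\delta$ of order type $\omega$ and $\sup C_\delta=\delta$ such that for every uncountable $S\subseteq\omega_1$ the set $\{\delta:C_\delta\subseteq S\}$ is stationary. *)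

(* Defs.v *)
From mathcomp Require Import all_boot.
From mathcomp Require Import boolp classical_sets cardinality.
Set Implicit Arguments. Unset Strict Implicit. Unset Printing Implicit Defensive.
Local Open Scope classical_set_scope.

(* (W, lt) is (isomorphic to) (omega_1, <): a strict well-order which is
   uncountable and all of whose proper initial segments are countable. *)
Record is_omega1 (W : Type) (lt : W -> W -> Prop) : Prop := {
  o1_irrefl : forall x, ~ lt x x;
  o1_trans  : forall x y z, lt x y -> lt y z -> lt x z;
  o1_total  : forall x y, lt x y \/ x = y \/ lt y x;
  o1_wf     : well_founded lt;
  o1_uncountable : ~ countable (@setT W);
  o1_segments_countable : forall a, countable [set x | lt x a] }.

Definition is_limit (W : Type) (lt : W -> W -> Prop) (d : W) : Prop :=
  (exists b, lt b d) /\ (forall b, lt b d -> exists g, lt b g /\ lt g d).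

Definition unbounded (W : Type) (lt : W -> W -> Prop) (C : set W) : Prop :=
  forall a, exists b, C b /\ lt a b.

Definition closed_set (W : Type) (lt : W -> W -> Prop) (C : set W) : Prop :=
  forall d, is_limit lt d ->
    (forall b, lt b d -> exists g, C g /\ lt b g /\ lt g d) -> C d.

Definition club (W : Type) (lt : W -> W -> Prop) (C : set W) : Prop :=
  closed_set lt C /\ unbounded lt C.

Definition stationary (W : Type) (lt : W -> W -> Prop) (S : set W) : Prop :=
  forall C, club lt C -> exists x, S x /\ C x.

Definition order_type_omega (W : Type) (lt : W -> W -> Prop) (C : set W) : Prop :=
  exists g : nat -> W, (forall m k, (m < k)%N -> lt (g m) (g k)) /\ C = range g.

Definition clubsuit (W : Type) (lt : W -> W -> Prop) : Prop :=
  exists Cseq : W -> set W,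
    (forall d, is_limit lt d ->
       [/\ Cseq d `<=` [set x | lt x d],
           order_type_omega lt (Cseq d) &
           (forall b, lt b d -> exists g, Cseq d g /\ lt b g)]) /\
    (forall S : set W, ~ countable S ->
       stationary lt [set d | is_limit lt d /\ Cseq d `<=` S]).

Definition subset_star (A B : set nat) : Prop := finite_set (A `\` B).

Definition pregap (n : nat) (L : 'I_n -> set (set nat)) : Prop :=
  forall (i j : 'I_n) (A B : set nat), i != j -> L i A -> L j B ->
    finite_set (A `&` B).

Definition separates (n : nat) (L : 'I_n -> set (set nat)) (c : 'I_n -> set nat) : Prop :=
  (forall (i : 'I_n) (A : set nat), L i A -> subset_star A (c i)) /\
  finite_set (\bigcap_(i in @setT 'I_n) c i).

Definition ngap (n : nat) (L : 'I_n -> set (set nat)) : Prop :=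
  pregap L /\ ~ exists c, separates L c.

Definition order_iso_star (W : Type) (lt : W -> W -> Prop) (F : set (set nat)) : Prop :=
  exists f : W -> set nat,
    (forall a, F (f a)) /\ (forall A, F A -> exists a, f a = A) /\
    (forall a b, (lt a b \/ a = b) <-> subset_star (f a) (f b)).

(* Main.v *)
Require Import Defs.
From mathcomp Require Import all_boot.
From mathcomp Require Import boolp classical_sets cardinality.
Local Open Scope classical_set_scope.
From mathcomp Require Import zify.
Set Implicit Arguments. Unset Strict Implicit. Unset Printing Implicit Defensive.

Definition bnd (A : set nat) := exists K, forall x, A x -> (x < K)%N.
Definition inf (A : set nat) := ~ bnd A.

Lemma bnd_fin A : bnd A -> finite_set A.
Proof. move=> [K HK]; apply: (@sub_finite_set _ _ `I_K) => //. Qed.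

Lemma fin_bnd A : finite_set A -> bnd A.
Proof.
move=> /finite_seqP[s ->]; exists (\max_(y <- s) y).+1 => x /= xs.
rewrite ltnS; exact: leq_bigmax_seq.
Qed.

Lemma bnd_sub (A B : set nat) : A `<=` B -> bnd B -> bnd A.
Proof. by move=> AB [K HK]; exists K => x /AB /HK. Qed.

Lemma bndU (A B : set nat) : bnd A -> bnd B -> bnd (A `|` B).
Proof.
move=> [K1 H1] [K2 H2]; exists (maxn K1 K2) => x [/H1|/H2]; lia.
Qed.

Lemma bnd0 : bnd set0. Proof. by exists 0. Qed.

Lemma bnd_big (m : nat) (F : nat -> set nat) :
  (forall l, (l <= m)%N -> bnd (F l)) ->
  bnd [set x | exists l, (l <= m)%N /\ F l x].
Proof.
elim: m => [|m IH] H.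
  by apply: (bnd_sub _ (H 0 (leqnn 0))) => x [l [+ Fx]]; rewrite leqn0 => /eqP <-.
have : bnd ([set x | exists l, (l <= m)%N /\ F l x] `|` F m.+1).
  by apply: bndU; [apply: IH => l lm; apply: H; lia| apply: H].
apply: bnd_sub => x [l [lm Fx]].
case: (ltngtP l m.+1) => [lm'|//|<-]; last by right.
  by left; exists l; split=> //; lia.
lia.
Qed.

Lemma bnd_big2 (m n : nat) (F : nat -> nat -> set nat) :
  (forall l j, (l <= m)%N -> (j < n)%N -> bnd (F l j)) ->
  bnd [set x | exists l j, [/\ (l <= m)%N, (j < n)%N & F l j x]].
Proof.
move=> H.
have : bnd [set x | exists l, (l <= m)%N /\ [set y | exists j, (j <= n.-1)%N /\ [set z | (j < n)%N /\ F l j z] y] x].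
  apply: bnd_big => l lm; apply: bnd_big => j jn.
  case: (ltnP j n) => jn'.
    by apply: (bnd_sub _ (H l j lm jn')) => x [].
  by apply: (bnd_sub _ bnd0) => x [] /=; lia.
apply: bnd_sub => x [l [j [lm jn Fx]]]; exists l; split=> //; exists j; split=> //; lia.
Qed.

Lemma inf_ex (A : set nat) : inf A -> forall K, exists x, A x /\ (K <= x)%N.
Proof.
move=> iA K; apply: contrapT => nE; apply: iA; exists K => x Ax.
rewrite ltnNge; apply/negP => Kx; apply: nE; by exists x.
Qed.

Lemma ex_inf (A : set nat) : (forall K, exists x, A x /\ (K <= x)%N) -> inf A.
Proof. move=> H [K HK]; have [x [Ax Kx]] := H K; have := HK x Ax; lia. Qed.

Lemma inf_minus (A B : set nat) : inf A -> bnd B -> inf (A `\` B).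
Proof.
move=> iA [K HK]; apply: ex_inf => K'; have [x [Ax xK]] := inf_ex iA (maxn K K').
exists x; split; [split=> // /HK|]; lia.
Qed.

Lemma bnd_img (L : nat) (f : nat -> nat) : bnd [set x | exists m, (m < L)%N /\ x = f m].
Proof.
case: L => [|L]; first by exists 0 => x [m []].
have : bnd [set x | exists l, (l <= L)%N /\ [set f l] x].
  by apply: bnd_big => l _; exists (f l).+1 => x /= ->.
apply: bnd_sub => x [m [mL ->]]; exists m; split=> //; lia.
Qed.


Lemma countableU T (A B : set T) : countable A -> countable B -> countable (A `|` B).
Proof.
move=> cA cB.
have : countable (\bigcup_(i in @setT bool) (if i then A else B)).
  by apply: bigcup_countable => // -[].
apply: sub_countable; apply: subset_card_le => x [Ax|Bx]; [by exists true|by exists false].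
Qed.

Lemma enum_countable T (S : set T) : countable S ->
  exists e : nat -> option T, forall x, S x <-> exists k, e k = Some x.
Proof.
move=> /countable_injP[f finj].
exists (fun k => match pselect (exists x, S x /\ f x = k) with
                 | left H => Some (proj1_sig (cid H)) | right _ => None end).
move=> x; split.
  move=> Sx; exists (f x); case: pselect => [H|[]]; last by exists x.
  case: (cid H) => y [Sy fy] /=; congr Some; apply: finj => //; exact: mem_set.
move=> [k]; case: pselect => // H [<-]; by case: (cid H) => y [].
Qed.

Section Omega1.
Variables (W : Type) (lt : W -> W -> Prop) (Hw : is_omega1 lt).

Lemma lt_irr x : ~ lt x x. Proof. exact: (@o1_irrefl _ _ Hw x). Qed.
Lemma lt_trans x y z : lt x y -> lt y z -> lt x z. Proof. exact: (@o1_trans _ _ Hw x y z). Qed.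
Lemma lt_total x y : lt x y \/ x = y \/ lt y x. Proof. exact: (@o1_total _ _ Hw x y). Qed.
Lemma lt_asym x y : lt x y -> lt y x -> False.
Proof. by move=> xy yx; apply: (@lt_irr x); apply: lt_trans xy yx. Qed.

Lemma bounded_of_countable (Y : set W) : countable Y -> exists a, forall y, Y y -> lt y a.
Proof.
move=> cY.
have cU : countable (Y `|` \bigcup_(y in Y) [set x | lt x y]).
  apply: countableU => //; apply: bigcup_countable => // y _.
  exact: (@o1_segments_countable _ _ Hw y).
have [a Ua] : exists a, ~ (Y `|` \bigcup_(y in Y) [set x | lt x y]) a.
  apply: contrapT => nE; apply: (@o1_uncountable _ _ Hw).
  apply: sub_countable cU; apply: subset_card_le => x _.
  by apply: contrapT => H; apply: nE; exists x.
exists a => y Yy; case: (lt_total y a) => [//|[ya|ay]].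
  by case: Ua; left; rewrite -ya.
by case: Ua; right; exists y.
Qed.

Lemma pigeon (U : set W) (V : nat -> set W) : ~ countable U ->
  (forall x, U x -> exists K, V K x) -> exists K, ~ countable (U `&` V K).
Proof.
move=> nU H; apply: contrapT => nE; apply: nU.
have : countable (\bigcup_(K in @setT nat) (U `&` V K)).
  apply: bigcup_countable => // K _; apply: contrapT => nc; apply: nE; by exists K.
apply: sub_countable; apply: subset_card_le => x Ux.
by have [K VK] := H x Ux; exists K.
Qed.

Lemma stat_uncount (Y : set W) : stationary lt Y -> ~ countable Y.
Proof.
move=> sY cY; have [a Ha] := bounded_of_countable cY.
have [x [Yx ax]] : exists x, Y x /\ lt a x.
  apply: sY; split.
    move=> d [[b bd] _] H; have [g [ag [_ gd]]] := H b bd; exact: lt_trans ag gd.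
  move=> a'.
  have [b Hb] := @bounded_of_countable [set a; a'] (finite_set_countable (finite_set2 _ _)).
  by exists b; split; apply: Hb; [left|right].
by apply: (@lt_asym x a) => //; apply: Ha.
Qed.

End Omega1.


Lemma inf_sub (A B : set nat) : inf A -> A `<=` B -> inf B.
Proof. by move=> iA AB bB; apply: iA; apply: bnd_sub AB bB. Qed.

Definition D := ((nat -> set nat) * (nat -> set nat) * set nat)%type.
Definition fa (d : D) := d.1.1.
Definition fp (d : D) := d.1.2.
Definition fz (d : D) := d.2.

Section Constr.
Variables (W : Type) (lt : W -> W -> Prop) (Hw : is_omega1 lt).
Variable n : nat.
Variable Cseq : W -> set W.
Hypothesis HC : forall d, is_limit lt d ->
  [/\ Cseq d `<=` [set x | lt x d], order_type_omega lt (Cseq d) &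
      (forall b, lt b d -> exists g, Cseq d g /\ lt b g)].

Fixpoint N (r : nat) (b : W) : Prop :=
  match r with 0 => True | r'.+1 => is_limit lt b /\ (forall c, Cseq b c -> N r' c) end.

Definition Loc (b : W) (d : D) : Prop :=
  [/\ (forall j j', (j < n)%N -> (j' < n)%N -> j != j' -> bnd (fa d j `&` fa d j')),
      (forall r, (r < n)%N -> fp d r `<=` fa d r),
      (forall r, (r < n)%N -> N r b -> inf (fp d r)),
      inf (fz d) &
      (forall j, (j < n)%N -> bnd (fa d j `&` fz d))].

Definition Rel (db dg : D) : Prop :=
  [/\ (forall j, (j < n)%N -> bnd (fa db j `\` fa dg j)),
      (forall j, (j < n)%N -> inf (fa dg j `\` fa db j)),
      (forall j j', (j < n)%N -> (j' < n)%N -> j != j' -> bnd (fa dg j `&` fa db j')),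
      (forall r j, (r < n)%N -> (j < n)%N -> bnd (fp dg r `&` fa db j)) &
      (forall j, (j < n)%N -> bnd (fa db j `&` fz dg))].

Definition Spec (a : W) (h : W -> D) (d : D) : Prop :=
  [/\ Loc a d, (forall b, lt b a -> Rel (h b) d) &
      (is_limit lt a -> forall r x, (0 < r)%N -> (r < n)%N -> fp d r x ->
          exists b, Cseq a b /\ fp (h b) r.-1 x)].

Section Step.
Variables (a : W) (h : W -> D).
Hypothesis HL : forall b, lt b a -> Loc b (h b).
Hypothesis HR : forall b c, lt c b -> lt b a -> Rel (h c) (h b).

Let A b j := fa (h b) j.

Lemma pairfin b c j j' : lt b a -> lt c a -> (j < n)%N -> (j' < n)%N -> j != j' ->
  bnd (A b j `&` A c j').
Proof.
move=> ba ca jn jn' jj.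
case: (lt_total Hw b c) => [bc|[<-|cb]].
- have [_ _ H _ _] := HR bc ca; rewrite setIC; apply: H => //; by rewrite eq_sym.
- by have [H _ _ _ _] := HL ba; apply: H.
- by have [_ _ H _ _] := HR cb ba; apply: H.
Qed.

Section SE.
Variable e : nat -> option W.
Hypothesis He : forall x, lt x a <-> exists k, e k = Some x.

Let E k j : set nat := match e k with Some b => A b j | None => set0 end.

Lemma E_lt k b : e k = Some b -> lt b a.
Proof. by move=> ek; apply/He; exists k. Qed.

Lemma E_pair k l j j' : (j < n)%N -> (j' < n)%N -> j != j' -> bnd (E k j `&` E l j').
Proof.
move=> jn jn' jj; rewrite /E.
case ek: (e k) => [b|]; last by apply: (bnd_sub _ bnd0) => x [].
case el: (e l) => [c|]; last by apply: (bnd_sub _ bnd0) => x [].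
by apply: pairfin => //; apply: E_lt; eauto.
Qed.

Let U k : set nat := [set y | exists l j, [/\ (l <= k)%N, (j < n)%N & E l j y]].

Lemma maxlvl k : (forall l, (l <= k)%N -> e l = None) \/
  exists bm, lt bm a /\ forall l b, (l <= k)%N -> e l = Some b -> b = bm \/ lt b bm.
Proof.
elim: k => [|k [IH|[bm [bma IH]]]].
- case e0: (e 0) => [b|]; [right; exists b; split; first exact: E_lt e0|left].
    by move=> l b'; rewrite leqn0 => /eqP ->; rewrite e0 => -[->]; left.
  by move=> l; rewrite leqn0 => /eqP ->.
- case ek: (e k.+1) => [b|]; [right; exists b; split; first exact: E_lt ek|left].
    move=> l b' lk el; have [lk'|ee] : (l <= k)%N \/ l = k.+1 by lia.
      by rewrite IH in el.
    by subst; rewrite ek in el; case: el => ->; left.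
  move=> l lk; have [lk'|->//] : (l <= k)%N \/ l = k.+1 by lia.
  exact: IH.
- case ek: (e k.+1) => [b|]; last first.
    right; exists bm; split=> // l b' lk el; have [lk'|ee] : (l <= k)%N \/ l = k.+1 by lia.
      by apply: IH el.
    by subst; rewrite ek in el.
  case: (lt_total Hw b bm) => [bbm|[bbm|bmb]].
  + right; exists bm; split=> // l b' lk el; have [lk'|ee] : (l <= k)%N \/ l = k.+1 by lia.
      by apply: IH el.
    by subst; rewrite ek in el; case: el => <-; right.
  + right; exists bm; split=> // l b' lk el; have [lk'|ee] : (l <= k)%N \/ l = k.+1 by lia.
      by apply: IH el.
    by subst; rewrite ek in el; case: el => <-; left.
  + right; exists b; split; first exact: E_lt ek.
    move=> l b' lk el; have [lk'|ee] : (l <= k)%N \/ l = k.+1 by lia.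
      have [->|] := IH l b' lk' el; first by right.
      by move=> H; right; apply: lt_trans H bmb.
    by subst; rewrite ek in el; case: el => ->; left.
Qed.

Lemma U_compl k : inf (~` U k).
Proof.
case: (maxlvl k) => [H|[bm [bma H]]].
  apply: ex_inf => K; exists K; split=> // -[l [j [lk jn]]].
  by rewrite /E H.
have [_ _ _ iZ bZ] := HL bma.
have : bnd [set x | exists l j, [/\ (l <= k)%N, (j < n)%N & (E l j `&` fz (h bm)) x]].
  apply: bnd_big2 => l j lk jn; rewrite /E.
  case el: (e l) => [b|]; last by apply: (bnd_sub _ bnd0) => x [].
  have [ebm|bbm] := H l b lk el; first by rewrite ebm; apply: (bZ j jn).
  by have [_ _ _ _ H5] := HR bbm bma; apply: H5.
move=> bB; apply: (inf_sub (inf_minus iZ bB)) => x [Zx nB] [l [j [lk jn Ex]]].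
by apply: nB; exists l, j; split.
Qed.

Section SX.
Variable xs : nat -> nat.
Hypothesis Hxs1 : forall k, (xs k < xs k.+1)%N.
Hypothesis Hxs2 : forall k, ~ U k (xs k).

Lemma xs_mono k l : (k < l)%N -> (xs k < xs l)%N.
Proof.
elim: l => // l IH kl; have [kl'|->] : (k < l)%N \/ k = l by lia.
  by have := IH kl'; have := Hxs1 l; lia.
exact: Hxs1.
Qed.

Lemma xs_ge k : (k <= xs k)%N.
Proof. elim: k => // k IH; have := Hxs1 k; lia. Qed.

Lemma xs_inj k l : xs k = xs l -> k = l.
Proof.
move=> E1; case: (ltngtP k l) => // kl; [have := xs_mono kl|have := xs_mono kl]; lia.
Qed.

Let X : set nat := [set x | exists k, x = xs k].
Let Xp j : set nat := [set x | exists k, k %% n.+1 = j /\ x = xs k].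

Lemma X_E l j : (j < n)%N -> bnd (X `&` E l j).
Proof.
move=> jn; exists (xs l) => x [[k ->] Ex].
case: (ltnP k l) => [kl|lk]; first exact: xs_mono.
by exfalso; apply: (Hxs2 (k:=k)); exists l, j; split.
Qed.

Lemma Xp_inf j : (j <= n)%N -> inf (Xp j).
Proof.
move=> jn; apply: ex_inf => K; exists (xs (K * n.+1 + j)); split.
  exists (K * n.+1 + j); split=> //; rewrite modnMDl modn_small //; lia.
have := xs_ge (K * n.+1 + j); nia.
Qed.

Lemma Xp_X j : Xp j `<=` X.
Proof. by move=> x [k [_ ->]]; exists k. Qed.

Lemma Xp_disj j j' x : j != j' -> Xp j x -> Xp j' x -> False.
Proof.
move=> jj [k [kj ->]] [k' [kj' /xs_inj ek]].
by move: jj; rewrite -kj -kj' ek eqxx.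
Qed.


Section SG.
Variable g : nat -> W.
Hypothesis Hg : is_limit lt a ->
  (forall m k, (m < k)%N -> lt (g m) (g k)) /\ Cseq a = range g.

Lemma g_in m : is_limit lt a -> Cseq a (g m).
Proof. by move=> la; have [_ ->] := Hg la; exists m. Qed.

Lemma g_lt m : is_limit lt a -> lt (g m) a.
Proof. move=> la; have [H _ _] := HC la; exact: H (g_in m la). Qed.

Lemma g_cof b : is_limit lt a -> lt b a -> exists M, forall m, (M <= m)%N -> lt b (g m).
Proof.
move=> la ba; have [_ _ H] := HC la; have [c [Cc bc]] := H b ba.
have [gm Ce] := Hg la; rewrite Ce in Cc; case: Cc => M _ ec.
exists M => m Mm; have [<-|Mm'] : M = m \/ (M < m)%N by lia.
  by rewrite ec.
by apply: (lt_trans Hw) (gm _ _ Mm'); rewrite ec.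
Qed.

Definition Adm r m x := [/\ fp (h (g m)) r.-1 x, (m <= x)%N, ~ X x,
   (forall l j b, (l <= m)%N -> (j < n)%N -> e l = Some b -> lt b (g m) -> ~ A b j x) &
   ((forall m' j, (m' < m)%N -> (j < n)%N -> ~ A (g m') j x) /\
   (forall j, (j < n)%N -> j != r.-1 -> ~ A (g m) j x))].

Lemma Adm_ex r m : is_limit lt a -> (0 < r)%N -> (r < n)%N -> N r.-1 (g m) ->
  exists x, Adm r m x.
Proof.
move=> la r0 rn Ng.
have gma := g_lt m la.
have [L1 L2 L3 _ _] := HL gma.
set P := fp (h (g m)) r.-1.
have rn' : (r.-1 < n)%N by lia.
have iP : inf P := L3 _ rn' Ng.
have PA : P `<=` A (g m) r.-1 := L2 _ rn'.
have [l0 el0] : exists l0, e l0 = Some (g m) by apply/He.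
have b1 : bnd (P `&` X).
  apply: (bnd_sub _ (X_E l0 rn')) => x [Px Xx]; split=> //; rewrite /E el0; exact: PA.
have b2 : bnd [set x | exists l j, [/\ (l <= m)%N, (j < n)%N &
      (fun y => P y /\ exists b, [/\ e l = Some b, lt b (g m) & A b j y]) x]].
  apply: bnd_big2 => l j lm jn.
  case el: (e l) => [b|]; last first.
    by apply: (bnd_sub _ bnd0) => x [_ [b' []]].
  have [bgm|nb] := pselect (lt b (g m)); last first.
    by apply: (bnd_sub _ bnd0) => x [_ [b' [[<-] bg _]]].
  have [_ _ _ R4 _] := HR bgm gma.
  by apply: (bnd_sub _ (R4 _ _ rn' jn)) => x [Px [b' [[<-] _ Ax]]]; split.
have b3 : bnd [set x | exists l j, [/\ (l <= m)%N, (j < n)%N &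
      (fun y => P y /\ (l < m)%N /\ A (g l) j y) x]].
  apply: bnd_big2 => l j lm jn.
  have [lm'|nl] := pselect (l < m)%N; last by apply: (bnd_sub _ bnd0) => x [_ []].
  have glgm : lt (g l) (g m) by have [H _] := Hg la; exact: H.
  have [_ _ _ R4 _] := HR glgm gma.
  apply: (bnd_sub _ (R4 _ _ rn' jn)) => x [Px [_ Ax]]; by split.
have b4 : bnd [set x | exists l j, [/\ (l <= 0)%N, (j < n)%N &
      (fun y => P y /\ j != r.-1 /\ A (g m) j y) x]].
  apply: bnd_big2 => l j _ jn.
  have [jr|nj] := pselect (j != r.-1); last by apply: (bnd_sub _ bnd0) => x [_ []].
  have jr' : r.-1 != j by rewrite eq_sym.
  apply: (bnd_sub _ (L1 _ _ rn' jn jr')) => x [Px [_ Ax]]; split=> //; exact: PA.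
have bB := bndU (bndU (bndU b1 b2) b3) b4.
have [x [[Px nB] mx]] := inf_ex (inf_minus iP bB) m.
exists x; split=> //; last split.
- by move=> Xx; apply: nB; do 3 left; split.
- move=> l j b lm jn el bg Ax; apply: nB; do 2 left; right; exists l, j; split=> //.
  by split=> //; exists b.
- move=> m' j mm jn Ax; apply: nB; left; right; exists m', j; split; [lia|done|].
  by split=> //; split.
- by move=> j jn jr Ax; apply: nB; right; exists 0, j; split.
Qed.

Section SP.
Variable pick : nat -> nat -> nat.
Hypothesis Hpick : forall r m, (exists x, Adm r m x) -> Adm r m (pick r m).

Let Q r : set nat := [set x | [/\ is_limit lt a, (0 < r)%N, (r < n)%N &
   exists m, x = pick r m /\ Adm r m (pick r m)]].

Lemma Q_inf r : (0 < r)%N -> (r < n)%N -> N r a -> inf (Q r).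
Proof.
case: r => // r _ rn [la HN].
apply: ex_inf => K.
have ad : Adm r.+1 K (pick r.+1 K).
  by apply: Hpick; apply: Adm_ex => //; apply: HN; apply: g_in.
exists (pick r.+1 K); split; first by split=> //; exists K.
by have [_ H _ _ _] := ad.
Qed.

Lemma Q_X r x : Q r x -> ~ X x.
Proof. by move=> [_ _ _ [m [-> [_ _ H _ _]]]]. Qed.

Lemma Q_P r x : Q r x -> exists b, Cseq a b /\ fp (h b) r.-1 x.
Proof.
move=> [la _ _ [m [-> [H _ _ _ _]]]]; exists (g m); split=> //; exact: g_in.
Qed.

Lemma Q_disj r r' x : Q r x -> Q r' x -> r = r'.
Proof.
move=> [la r0 rn [m [ex [P1 _ _ _ [C1 D1]]]]] [_ r0' rn' [m' [ex' [P2 _ _ _ [C2 D2]]]]].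
rewrite -ex in P1 C1 D1; rewrite -ex' in P2 C2 D2.
apply: contrapT => rr.
have rr' : r.-1 != r'.-1 by apply/eqP; lia.
have A1 : A (g m) r.-1 x.
  have [_ L2 _ _ _] := HL (g_lt m la); apply: (L2 r.-1) => //; lia.
have A2 : A (g m') r'.-1 x.
  have [_ L2 _ _ _] := HL (g_lt m' la); apply: (L2 r'.-1) => //; lia.
have [mm|[mm|mm]] : (m < m')%N \/ m = m' \/ (m' < m)%N by lia.
- by apply: (C2 m r.-1) => //; lia.
- by subst m'; apply: (D2 r.-1) => //; lia.
- by apply: (C1 m' r'.-1) => //; lia.
Qed.

Lemma Q_fin r b j : lt b a -> (j < n)%N -> bnd (Q r `&` A b j).
Proof.
move=> ba jn.
have [la|nla] := pselect (is_limit lt a); last by apply: (bnd_sub _ bnd0) => x [[]].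
have [l el] : exists l, e l = Some b by apply/He.
have [M HM] := g_cof la ba.
have := bnd_img (maxn l M) (pick r).
apply: bnd_sub => x [[_ _ _ [m [ex [_ _ _ C _]]]] Ax].
exists m; split=> //.
rewrite ltnNge; apply/negP => H.
by apply: (C l j b) => //; [lia | apply: HM; lia | rewrite -ex].
Qed.

Let Bad j k x := (exists l j', [/\ (l <= k)%N, (j' < n)%N, j' != j & E l j' x]) \/ X x \/
   (exists r, (r <= n)%N /\ r != j /\ Q r x).

Lemma Bad_bnd j k : (j < n)%N -> bnd (E k j `&` Bad j k).
Proof.
move=> jn.
have b1 : bnd [set x | exists l j', [/\ (l <= k)%N, (j' < n)%N &
     (fun y => j' != j /\ (E k j `&` E l j') y) x]].
  apply: bnd_big2 => l j' lk jn'.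
  have [jj|nj] := pselect (j' != j); last by apply: (bnd_sub _ bnd0) => x [].
  have jj' : j != j' by rewrite eq_sym.
  by apply: (bnd_sub _ (E_pair k l jn jn' jj')) => x [_ H].
have b2 : bnd (E k j `&` X) by rewrite setIC; apply: X_E.
have b3 : bnd [set x | exists r, (r <= n)%N /\ (E k j `&` Q r) x].
  apply: bnd_big => r rn; rewrite /E; case ek: (e k) => [b|]; last first.
    by apply: (bnd_sub _ bnd0) => x [].
  rewrite setIC; apply: Q_fin => //; exact: E_lt ek.
apply: (bnd_sub _ (bndU (bndU b1 b2) b3)).
move=> x [Ex [[l [j' [lk jn' jj El]]]|[Xx|[r [rn [rj Qx]]]]]].
- by left; left; exists l, j'; split.
- by left; right; split.
- by right; exists r; split.
Qed.

Section SM.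
Variable mk : nat -> nat -> nat.
Hypothesis Hmk : forall j k x, (j < n)%N -> E k j x -> Bad j k x -> (x < mk j k)%N.

Let Bs j : set nat := [set x | exists k, E k j x /\ (mk j k <= x)%N].

Lemma Bs_disj j j' x : (j < n)%N -> (j' < n)%N -> j != j' -> Bs j x -> Bs j' x -> False.
Proof.
move=> jn jn' jj [k [Ek mk1]] [l [El mk2]].
have [lk|kl] := leqP l k.
  have : Bad j k x by left; exists l, j'; split=> //; rewrite eq_sym.
  move/(Hmk jn Ek); lia.
have : Bad j' l x by left; exists k, j; split=> //; lia.
move/(Hmk jn' El); lia.
Qed.

Lemma Bs_X j x : (j < n)%N -> Bs j x -> ~ X x.
Proof.
move=> jn [k [Ek mkx]] Xx.
have : Bad j k x by right; left.
move/(Hmk jn Ek); lia.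
Qed.

Lemma Bs_Q j r x : (j < n)%N -> (r <= n)%N -> r != j -> Bs j x -> ~ Q r x.
Proof.
move=> jn rn rj [k [Ek mkx]] Qx.
have : Bad j k x by right; right; exists r.
move/(Hmk jn Ek); lia.
Qed.

Lemma Bs_E j j' l : (j < n)%N -> (j' < n)%N -> j != j' -> bnd (Bs j `&` E l j').
Proof.
move=> jn jn' jj.
have : bnd [set x | exists k, (k <= l)%N /\ (E k j `&` E l j') x].
  by apply: bnd_big => k _; exact: E_pair.
apply: bnd_sub => x [[k [Ek mkx]] El]; exists k; split=> //.
rewrite leqNgt; apply/negP => lk.
have : Bad j k x by left; exists l, j'; split=> //; [lia| rewrite eq_sym].
move/(Hmk jn Ek); lia.
Qed.

Lemma E_Bs k j : (j < n)%N -> bnd (E k j `\` Bs j).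
Proof.
move=> jn; exists (mk j k) => x [Ek nB]; rewrite ltnNge; apply/negP => H.
by apply: nB; exists k.
Qed.

Let dnew : D := ((fun j => Bs j `|` Xp j `|` Q j), (fun r => if r == 0 then Xp 0 else Q r), Xp n).

Lemma dnew_spec : Spec a h dnew.
Proof.
split.
- split.
  + move=> j j' jn jn' jj; apply: (bnd_sub _ bnd0) => x [] /=.
    move=> [[B1|X1]|Q1] [[B2|X2]|Q2].
    * exact: Bs_disj B1 B2.
    * exact: Bs_X jn B1 (Xp_X X2).
    * by apply: Bs_Q jn _ _ B1 Q2; [lia|rewrite eq_sym].
    * exact: Bs_X jn' B2 (Xp_X X1).
    * exact: Xp_disj jj X1 X2.
    * exact: Q_X Q2 (Xp_X X1).
    * by apply: Bs_Q jn' _ _ B2 Q1; [lia|].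
    * exact: Q_X Q1 (Xp_X X2).
    * by move: jj; rewrite (Q_disj Q1 Q2) eqxx.
  + move=> r rn x; rewrite /fp /fa /=; case: (r =P 0) => [e0|_] /= H.
      by subst r; left; right.
    by right.
  + move=> r rn Nr; rewrite /fp /=; case: (r =P 0) => [e0|r0] /=.
      by apply: Xp_inf; lia.
    by apply: Q_inf => //; lia.
  + by apply: Xp_inf.
  + move=> j jn; apply: (bnd_sub _ bnd0) => x [] /= [[B1|X1]|Q1] Xn.
    * exact: Bs_X jn B1 (Xp_X Xn).
    * by apply: Xp_disj X1 Xn; apply/eqP; lia.
    * exact: Q_X Q1 (Xp_X Xn).
- move=> b ba; have [l el] : exists l, e l = Some b by apply/He.
  have AE : forall j, fa (h b) j = E l j by move=> j; rewrite /E el.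
  split.
  + move=> j jn; rewrite AE; apply: (bnd_sub _ (E_Bs l jn)) => x [El nf].
    by split=> // Bx; apply: nf; left; left.
  + move=> j jn; rewrite AE.
    apply: (inf_sub (inf_minus (Xp_inf (ltnW jn)) (X_E l jn))) => x [Xx nXE]; split; first by left; right.
    by move=> El; apply: nXE; split; [exact: (Xp_X Xx)|].
  + move=> j j' jn jn' jj; rewrite AE.
    have q : bnd (Q j `&` E l j') by rewrite -AE; exact: Q_fin.
    have := bndU (bndU (Bs_E l jn jn' jj) (X_E l jn')) q.
    apply: bnd_sub => x [[[B1|X1]|Q1] El].
    * by left; left.
    * by left; right; split; [exact: (Xp_X X1)|].
    * by right.
  + move=> r j rn jn; rewrite AE /fp /=; case: (r =P 0) => _.
      by apply: (bnd_sub _ (X_E l jn)) => x [X1 El]; split; [exact: (Xp_X X1)|].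
    by rewrite -AE; exact: Q_fin.
  + move=> j jn; rewrite AE; apply: (bnd_sub _ (X_E l jn)) => x [El Xn].
    by split; [exact: (Xp_X Xn)|].
- move=> la r x r0 rn; rewrite /fp /=; case: (r =P 0) => [r00|_]; first lia.
  exact: Q_P.
Qed.

Lemma dnew_ex : exists d, Spec a h d.
Proof. by exists dnew; exact: dnew_spec. Qed.
End SM.

Lemma ex_P : exists d, Spec a h d.
Proof.
have : forall p : nat * nat, exists K, forall x, (p.1 < n)%N -> E p.2 p.1 x -> Bad p.1 p.2 x -> (x < K)%N.
  move=> [j k] /=; have [jn|nj] := ltnP j n.
    have [K HK] := Bad_bnd k jn; exists K => x _ Ex Bx; apply: HK; by split.
  by exists 0 => x jn; lia.
move=> /choice[f Hf].
apply: (@dnew_ex (fun j k => f (j, k))) => j k x; exact: (Hf (j, k)).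
Qed.
End SP.

Lemma ex_G : exists d, Spec a h d.
Proof.
have : forall p : nat * nat, exists x, (exists y, Adm p.1 p.2 y) -> Adm p.1 p.2 x.
  move=> p; have [[y Hy]|ne] := pselect (exists y, Adm p.1 p.2 y).
    by exists y.
  by exists 0.
move=> /choice[f Hf].
apply: (@ex_P (fun r m => f (r, m))) => r m; exact: (Hf (r, m)).
Qed.
End SG.

Lemma ex_X : exists d, Spec a h d.
Proof.
have [g Hg] : exists g : nat -> W, is_limit lt a ->
    (forall m k, (m < k)%N -> lt (g m) (g k)) /\ Cseq a = range g.
  have [la|nla] := pselect (is_limit lt a).
    have [_ [g [gm Ce]] _] := HC la; by exists g.
  by exists (fun _ => a).
exact: (@ex_G g Hg).
Qed.
End SX.

Lemma ex_E : exists d, Spec a h d.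
Proof.
have : forall p : nat * nat, exists y, ~ U p.1 y /\ (p.2 <= y)%N.
  move=> [k K] /=; have [y [Hy Ky]] := inf_ex (U_compl (k:=k)) K; by exists y.
move=> /choice[f Hf].
pose xs := fix xs k := match k with 0 => f (0, 0) | k'.+1 => f (k'.+1, (xs k').+1) end.
apply: (@ex_X xs) => k.
  by have [_ H] := Hf (k.+1, (xs k).+1).
case: k => [|k]; first by have [H _] := Hf (0, 0).
by have [H _] := Hf (k.+1, (xs k).+1).
Qed.
End SE.

Lemma step_exists : exists d, Spec a h d.
Proof.
have [e He] := enum_countable (@o1_segments_countable _ _ Hw a).
exact: (@ex_E e He).
Qed.
End Step.
End Constr.


Section Rec.
Variables (W : Type) (lt : W -> W -> Prop) (Hw : is_omega1 lt).
Variable n : nat.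
Variable Cseq : W -> set W.
Hypothesis HC : forall d, is_limit lt d ->
  [/\ Cseq d `<=` [set x | lt x d], order_type_omega lt (Cseq d) &
      (forall b, lt b d -> exists g, Cseq d g /\ lt b g)].

Definition d0 : D := ((fun _ => set0, fun _ => set0), set0).

Definition choose (P : D -> Prop) : D :=
  match pselect (exists d, P d) with left H => proj1_sig (cid H) | right _ => d0 end.

Lemma chooseP (P : D -> Prop) : (exists d, P d) -> P (choose P).
Proof. by move=> H; rewrite /choose; case: pselect => // H'; case: (cid H'). Qed.

Definition ext a (h' : forall b, lt b a -> D) : W -> D :=
  fun b => match pselect (lt b a) with left H => h' b H | right _ => d0 end.

Definition F a (h' : forall b, lt b a -> D) : D := choose (Spec lt n Cseq a (ext h')).

Definition rec := Fix (@o1_wf _ _ Hw) (fun _ => D) F.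

Lemma rec_eq a : rec a = @F a (fun b _ => rec b).
Proof.
rewrite /rec Fix_eq // => x f g Hfg; rewrite /F.
have -> : ext f = ext g by apply: funext => b; rewrite /ext; case: pselect.
by [].
Qed.

Lemma rec_inv a : [/\ Loc lt n Cseq a (rec a), (forall b, lt b a -> Rel n (rec b) (rec a)) &
  (is_limit lt a -> forall r x, (0 < r)%N -> (r < n)%N -> fp (rec a) r x ->
          exists b, Cseq a b /\ fp (rec b) r.-1 x)].
Proof.
elim/(well_founded_ind (@o1_wf _ _ Hw)): a => a IH.
set h := ext (fun b (_ : lt b a) => rec b).
have hE b : lt b a -> h b = rec b by move=> ba; rewrite /h /ext; case: pselect.
have : Spec lt n Cseq a h (rec a).
  rewrite rec_eq /F -/h; apply: chooseP; apply: (step_exists Hw HC).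
    by move=> b ba; rewrite hE //; have [] := IH b ba.
  by move=> b c cb ba; rewrite !hE //; [have [_ H _] := IH b ba; exact: H|exact: (lt_trans Hw) cb ba].
move=> [L1 L2 L3]; split=> //.
  by move=> b ba; rewrite -hE //; exact: L2.
move=> la r x r0 rn fx; have [b [Cb fb]] := L3 la r x r0 rn fx.
exists b; split=> //; rewrite -hE //; have [H _ _] := HC la; exact: H.
Qed.

End Rec.

Unset Implicit Arguments.
Theorem mainTheorem6 (W : Type) (lt : W -> W -> Prop) :
  is_omega1 lt -> clubsuit lt ->
  forall n : nat, (2 <= n)%N ->
    exists L : 'I_n -> set (set nat),
      ngap L /\ forall i : 'I_n, order_iso_star lt (L i).
Proof.
move=> Hw [Cseq [HC Hclub]] n n2.
pose R := rec Hw n Cseq.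
have Inv := rec_inv Hw n HC.
exists (fun i => range (fun a => fa (R a) i)).
split; last first.
  move=> i; exists (fun a => fa (R a) i); split; first by move=> a; exists a.
  split; first by move=> A [a _ <-]; exists a.
  move=> a b; split.
    case=> [ab|<-].
      by apply: bnd_fin; have [_ H _] := Inv b; have [H1 _ _ _ _] := H a ab; apply: H1.
    by apply: bnd_fin; exists 0 => x [].
  move=> /fin_bnd bd; case: (lt_total Hw a b) => [ab|[ab|ba]]; [by left|by right|].
  have [_ H _] := Inv a; have [_ H2 _ _ _] := H b ba; by case: (H2 i (ltn_ord i)).
split.
  move=> i j A B ij [a _ <-] [b _ <-]; apply: bnd_fin.
  case: (lt_total Hw a b) => [ab|[<-|ba]].
  - have [_ H _] := Inv b; have [_ _ H3 _ _] := H a ab.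
    by rewrite setIC; apply: H3 => //; rewrite eq_sym.
  - by have [[H _ _ _ _] _ _] := Inv a; apply: H.
  - by have [_ H _] := Inv a; have [_ _ H3 _ _] := H b ba; apply: H3.
move=> [c [Hc Hcap]].
pose cn j x := forall i : 'I_n, val i = j -> c i x.
have sep a j : (j < n)%N -> bnd (fa (R a) j `\` cn j).
  move=> jn; have := Hc (Ordinal jn) (fa (R a) j) (ex_intro2 _ _ a I erefl).
  move/fin_bnd; apply: bnd_sub => x [fx ncx]; split=> // cx; apply: ncx => i ij.
  by have -> : i = Ordinal jn by apply: val_inj.
have [M HM] := fin_bnd Hcap.
pose capr r x := forall j, (j <= r)%N -> cn j x.
pose good r K a := forall x, fp (R a) r x -> (K <= x)%N -> capr r x.
have claim : forall r, (r < n)%N -> exists K, ~ countable [set a | good r K a /\ N lt Cseq r a].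
  elim=> [n0|r IH rn].
    have HH : forall a, setT a -> exists K, (fun K a => good 0 K a /\ N lt Cseq 0 a) K a.
      move=> a _; have [K HK] := sep a 0 n0; exists K; split=> // x fx Kx j; rewrite leqn0 => /eqP ->.
      apply: contrapT => nc; have [[_ L _ _ _] _ _] := Inv a.
      have := HK x; rewrite /= => H; have := H (conj (L _ n0 _ fx) nc); lia.
    have [K nc] := pigeon (@o1_uncountable _ _ Hw) HH.
    exists K => cc; apply: nc; apply: sub_countable cc.
    by apply: subset_card_le => a [].
  have [K nT] := IH (ltnW rn).
  have sY := Hclub _ nT.
  have nY := stat_uncount Hw sY.
  have HH : forall a, [set d | is_limit lt d /\ Cseq d `<=` [set a | good r K a /\ N lt Cseq r a]] a ->
      exists K', (fun K' a => good r.+1 K' a /\ N lt Cseq r.+1 a) K' a.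
    move=> a [la CT]; have [K1 HK1] := sep a r.+1 rn.
    exists (maxn K K1); split; last by split=> // b /CT [].
    move=> x fx Kx j jr.
    have [[_ L2 _ _ _] _ L3] := Inv a.
    have [jr'|->] : (j <= r)%N \/ j = r.+1 by lia.
      have [b [Cb fb]] := L3 la r.+1 x erefl rn fx.
      have [gb _] := CT b Cb; apply: (gb x fb) => //; lia.
    apply: contrapT => nc; have := HK1 x (conj (L2 _ rn _ fx) nc); lia.
  have [K' nc] := pigeon nY HH.
  exists K' => cc; apply: nc; apply: sub_countable cc.
  by apply: subset_card_le => a [].
have n1 : (n.-1 < n)%N by lia.
have [K nT] := claim _ n1.
have [a [ga Na]] : exists a, good n.-1 K a /\ N lt Cseq n.-1 a.
  apply: contrapT => ne; apply: nT; apply: sub_countable (countable0 W).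
  by apply: subset_card_le => a Ha; apply: ne; exists a.
have [[_ _ L3 _ _] _ _] := Inv a.
have [x [fx Kx]] := inf_ex (L3 _ n1 Na) (maxn K M).
have := HM x; have cx : (\bigcap_(i in [set: 'I_n]) c i) x.
  move=> i _; have Ki : (K <= x)%N by lia.
  have iv : (nat_of_ord i <= n.-1)%N by have := ltn_ord i; lia.
  exact: (ga x fx Ki (nat_of_ord i) iv i erefl).
move=> /(_ cx); lia.
Qed.
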